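(* Let $K$ be a finite field of characteristic $p$ and let $d$ be an integer with $\gcd(d,|K|-1)=1$ that is nondegenerate over $K$. Then $|W_{K,d}(a)|<|K|$ for all $a\in K^\times$.
   Context: $\psi_K(x)=\exp(2\pi i\,\mathrm{Tr}_{K/\mathbb{F}_p}(x)/p)$ is the canonical additive character of $K$, and for $a\in K$ the Weil sum is $W_{K,d}(a)=\sum_{x\in K}\psi_K(x^d+ax)$ (a real algebraic integer). $d$ is degenerate over $K$ if $d\equiv p^j\pmod{|K|-1}$ for some integer $j$, and nondegenerate otherwise. *)

(* Defs.v *)
From HB Require Import structures.
From mathcomp Require Import all_boot all_order all_algebra all_field.
Set Implicit Arguments. Unset Strict Implicit. Unset Printing Implicit Defensive.
Import Order.TTheory GRing.Theory Num.Theory.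
Local Open Scope ring_scope.

(* The complex number exp(2 pi i / p), realised in algC:
   p.-root (-1) is the p-th root of -1 of minimal nonnegative argument,
   i.e. exp(i pi / p); its square is exp(2 i pi / p). *)
Definition zeta_p (p : nat) : algC := (p.-root (-1)) ^+ 2.

Definition absTrace (K : finFieldType) (p : nat) (x : K) : K :=
  \sum_(i < logn p #|K|) x ^+ (p ^ i).

Definition trace_nat (K : finFieldType) (p : nat) (x : K) : nat :=
  if [pick k : 'I_p | (k%:R : K) == absTrace p x] is Some k then val k else 0%N.

Definition psiK (K : finFieldType) (p : nat) (x : K) : algC :=
  zeta_p p ^+ trace_nat p x.

Definition weil_sum (K : finFieldType) (p d : nat) (a : K) : algC :=
  \sum_(x : K) psiK p (x ^+ d + a * x).

Definition degenerate (K : finFieldType) (p d : nat) : Prop :=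
  exists j : nat, d = p ^ j %[mod #|K|.-1].

(* Main.v *)
Require Import Defs.
From HB Require Import structures.
From mathcomp Require Import all_boot all_order all_algebra all_field.
From mathcomp Require Import cyclic zify.
Import Order.TTheory GRing.Theory Num.Theory.

Section NTs.
Lemma NT_deg (p n d i m : nat) : (m.+1 = p ^ n)%N -> (2 <= m)%N -> (i < n)%N ->
  (m %| m.-1 + d * p ^ i)%N -> exists j, d = p ^ j %[mod m].
Proof.
move=> hq m2 lin; rewrite /dvdn => /eqP hdv; exists (n - i).
have h1 : (d * p ^ i) %% m = 1 %% m.
  rewrite -(modnDl (d * p ^ i) m).
  rewrite -{1}(prednK (ltnW m2 : (0 < m)%N)) addSn -addn1.
  by rewrite -(modnDml (m.-1 + d * p ^ i) 1 m) hdv.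
have e1 : (d * p ^ i * p ^ (n - i)) %% m = p ^ (n - i) %% m.
  rewrite -(modnMml (d * p ^ i) (p ^ (n - i)) m).
  rewrite h1 (modn_small m2) mul1n. reflexivity.
have e2 : (d * p ^ i * p ^ (n - i)) %% m = d %% m.
  rewrite -mulnA -expnD subnKC; last exact: ltnW.
  rewrite -hq -(modnMmr d m.+1 m) -addn1 (modnDl 1 m) (modn_small m2) muln1.
  reflexivity.
rewrite -e2 e1; reflexivity.
Qed.

Lemma NT_ndvd_pow (p n i m : nat) : (m.+1 = p ^ n)%N -> (1 < p)%N -> (0 < i < n)%N ->
  ~~ (m %| m.-1 + p ^ i)%N.
Proof.
move=> hq p1 /andP[i0 lin].
have pi1 : (1 < p ^ i)%N by rewrite -(exp1n i) ltn_exp2r.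
have piq : (p ^ i < m.+1)%N by rewrite hq ltn_exp2l.
clear hq.
have m0 : (0 < m)%N by rewrite -ltnS (leq_trans pi1) // ltnW.
have -> : (m.-1 + p ^ i = m + (p ^ i).-1)%N.
  lia.
rewrite dvdn_addr // /dvdn modn_small; last lia.
rewrite -lt0n; lia.
Qed.

Lemma NT_ndvd_pred (m : nat) : (2 <= m)%N -> ~~ (m %| m.-1)%N.
Proof.
move=> m2; rewrite /dvdn modn_small; last lia.
rewrite -lt0n; lia.
Qed.

End NTs.

Local Open Scope ring_scope.


Lemma zeta_prim (p : nat) : prime p -> p.-primitive_root (zeta_p p).
Proof.
move=> pp; have p0 := prime_gt0 pp; have p1 := prime_gt1 pp.
have [y Ey] : {y : algC | y = p.-root (-1)} by exists (p.-root (-1)).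
have yp : y ^+ p = -1 by rewrite Ey rootCK.
have zE : zeta_p p = y ^+ 2 by rewrite Ey.
have zp : zeta_p p ^+ p = 1 by rewrite zE exprAC yp sqrrN expr1n.
have [m pm mdvd] := prim_order_exists p0 zp.
have [m1 | m1] := eqVneq m 1%N; last first.
  by have := prime_nt_dvdP pp m1; move/(_ mdvd) => mp; rewrite mp in pm.
exfalso; move: pm; rewrite m1 => /prim_expr_order; rewrite expr1 zE => /eqP.
rewrite sqrf_eq1 => /orP[/eqP y1 | /eqP yN1].
  move: yp; rewrite y1 expr1n => /eqP; rewrite -subr_eq0 opprK.
  by rewrite (_ : 1 + 1 = 2%:R) // pnatr_eq0.
have h2p : (0 < 2 * p)%N by rewrite muln_gt0 p0.
have [z zprim] := C_prim_root_exists h2p.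
have zpN1 : z ^+ p = -1.
  have : (z ^+ p) ^+ 2 == 1 by rewrite -exprM mulnC (prim_expr_order zprim).
  rewrite sqrf_eq1 => /orP[|/eqP //].
  rewrite -(prim_order_dvd zprim) => /dvdn_leq => /(_ p0).
  by rewrite leqNgt ltn_Pmull.
have z2 : z ^+ 2 != 1.
  rewrite -(prim_order_dvd zprim); apply/negP => /dvdn_leq => /(_ isT).
  move=> h; have : (p <= 1)%N by rewrite -(leq_pmul2l (isT : (0 < 2)%N)) muln1.
  by rewrite leqNgt p1.
have nz : `|z| = 1.
  apply/eqP; rewrite -(pexpr_eq1 h2p) ?normr_ge0 // -normrX (prim_expr_order zprim).
  by rewrite normr1.
have key : forall w : algC, w ^+ p = -1 -> 0 <= 'Im w -> `|w| = 1 -> w ^+ 2 != 1 -> False.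
  move=> w wp Iw nw w2.
  have hRe : 'Re w <= -1.
    have := rootC_Re_max p0 wp Iw; rewrite -Ey yN1 raddfN /=.
    by rewrite (_ : 'Re 1 = 1) //; apply/Creal_ReP; rewrite rpred1.
  have hRe2 : -1 <= 'Re w.
    have := (leif_normC_Re_Creal w).1; rewrite nw.
    by rewrite real_ler_norml ?Creal_Re // => /andP[].
  have ReN1 : 'Re w = -1 by apply/eqP; rewrite eq_le hRe hRe2.
  have : `|'Re w| == `|w| by rewrite ReN1 nw normrN normr1.
  rewrite (leif_normC_Re_Creal w).2 => /Creal_ReP; rewrite ReN1 => wN1.
  by move: w2; rewrite -wN1 sqrrN expr1n eqxx.
have [Iz | Iz] := boolP (0 <= 'Im z); first exact: (key z).
apply: (key z^* ).
- by rewrite -rmorphXn zpN1 rmorphN rmorph1.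
- rewrite Im_conj oppr_ge0; move: Iz; rewrite real_leNgt ?rpred0 ?Creal_Im //.
  by apply: contra => /ltW.
- by rewrite norm_conjC.
- by rewrite -rmorphXn -(rmorph1 Num.Def.conjC) (can_eq conjCK).
Qed.

Section S.
Variables (K : finFieldType) (p : nat).
Hypothesis pK : p \in [pchar K].


Lemma cardK_pow : #|K| = (p ^ logn p #|K|)%N.
Proof. exact: (card_pprimeChar pK). Qed.

Lemma frobn (x y : K) i : (x + y) ^+ (p ^ i) = x ^+ (p ^ i) + y ^+ (p ^ i).
Proof.
apply: exprDn_pchar; rewrite pnatX; apply/orP; left.
by rewrite pnatE ?(pcharf_prime pK).
Qed.

Lemma absTraceD (x y : K) : absTrace p (x + y) = absTrace p x + absTrace p y.
Proof. by rewrite /absTrace -big_split /=; apply: eq_bigr => i _; rewrite frobn. Qed.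

Lemma absTrace_frob (x : K) : absTrace p x ^+ p = absTrace p x.
Proof.
rewrite /absTrace -(pFrobenius_autE pK) rmorph_sum /=.
under eq_bigr => i _ do rewrite pFrobenius_autE -exprM -expnSr.
set n := logn p #|K|.
apply: (addrI (x ^+ (p ^ 0))).
have E : x ^+ (p ^ 0) + \sum_(i < n) x ^+ (p ^ i.+1) = \sum_(i < n) x ^+ (p ^ i) + x ^+ (p ^ n).
  have E1 := big_ord_recl n (fun i : 'I_n.+1 => x ^+ (p ^ i)).
  have E2 := big_ord_recr n (fun i : 'I_n.+1 => x ^+ (p ^ i)).
  simpl in E1, E2; by rewrite -E1 E2.
rewrite E addrC.
by congr (_ + _); rewrite expn0 expr1 -cardK_pow expf_card.
Qed.

Lemma fixed_primefield (y : K) : y ^+ p = y -> exists k : 'I_p, k%:R = y.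
Proof.
move=> yp; have pp := pcharf_prime pK; have p1 := prime_gt1 pp.
suff /existsP[k /eqP Hk] : [exists k : 'I_p, (k%:R == y)] by exists k.
apply: contraT => /existsPn H.
pose P : {poly K} := 'X^p - 'X.
have sP : size P = p.+1 by rewrite size_polyDl ?size_polyXn // size_polyN size_polyX.
have nzP : P != 0 by rewrite -size_poly_eq0 sP.
pose rs := y :: [seq (val k)%:R | k : 'I_p].
have : (size rs < size P)%N.
  apply: max_poly_roots => //.
    apply/allP => z; rewrite inE => /orP[/eqP-> | /mapP[k _ ->]].
      by rewrite /root !hornerE yp subrr.
    by rewrite /root !hornerE -[_ ^+ p](pFrobenius_autE pK) pFrobenius_aut_nat subrr.
  rewrite /= map_inj_uniq ?enum_uniq ?andbT.
    by apply/mapP => -[k _ /esym /eqP]; rewrite (negbTE (H k)).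
  move=> i j /eqP; rewrite -subr_eq0.
  wlog lij : i j / (j <= i)%N.
    move=> W E; case: (leqP j i) => lij; first exact: W.
    by apply/esym/W; [exact: ltnW | rewrite -opprB oppr_eq0].
  rewrite -natrB // -(dvdn_pcharf pK) => /dvdn_leq H'.
  case: (posnP (i - j)) => [/eqP ij | pos].
    by apply: val_inj; apply/eqP; rewrite eqn_leq -subn_eq0 ij lij.
  have := H' pos; rewrite leqNgt (leq_ltn_trans (leq_subr _ _) (ltn_ord i)) //.
by rewrite sP /= size_map size_enum_ord ltnn.
Qed.


Lemma cardK_gt1 : (1 < #|K|)%N. Proof. exact: finNzRing_gt1. Qed.

Lemma unit_pow (x : K) : x != 0 -> x ^+ (#|K|.-1) = 1.
Proof.
move=> xnz; apply: (mulfI xnz); rewrite mulr1 -exprS prednK ?expf_card //.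
exact: ltnW cardK_gt1.
Qed.

Lemma prim_root_K : {w : K | (#|K|.-1).-primitive_root w}.
Proof.
have q0 : (0 < #|K|.-1)%N by rewrite -ltnS prednK ?cardK_gt1 // ltnW ?cardK_gt1.
pose rs := enum (predC1 (0 : K)).
have : has (#|K|.-1).-primitive_root rs.
  apply: has_prim_root => //.
  - apply/allP => x; rewrite mem_enum /= => xnz.
    by rewrite unity_rootE unit_pow.
  - exact: enum_uniq.
  - by rewrite -cardE cardC1.
by case/hasP/sig2_eqW => w _ pw; exists w.
Qed.

Lemma psum0 k : ~~ (#|K|.-1 %| k)%N -> \sum_(x : K) x ^+ k = 0.
Proof.
move=> nd; have [w pw] := prim_root_K.
have wk : w ^+ k != 1 by rewrite -(prim_order_dvd pw).
have wnz : w != 0.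
  have q0 := prim_order_gt0 pw.
  apply/eqP => w0; have := prim_expr_order pw; rewrite w0 expr0n eqn0Ngt q0 /=.
  by move/eqP; rewrite eq_sym oner_eq0.
have E : \sum_(x : K) x ^+ k = w ^+ k * \sum_(x : K) x ^+ k.
  rewrite {1}(reindex_inj (mulfI wnz)) /= mulr_sumr.
  by apply: eq_bigr => x _; rewrite exprMn.
have : (1 - w ^+ k) * \sum_(x : K) x ^+ k = 0 by rewrite mulrBl mul1r -E subrr.
by move/eqP; rewrite mulf_eq0 subr_eq0 eq_sym (negbTE wk) /= => /eqP.
Qed.

Lemma cardK_nat0 : (#|K|%:R : K) = 0.
Proof.
apply/eqP; rewrite -(dvdn_pcharf pK) (card_pprimeChar pK).
have : (0 < logn p #|K|)%N.
  rewrite lt0n; apply/negP => /eqP e.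
  by move: cardK_gt1; rewrite (card_pprimeChar pK) e.
by case: (logn _ _) => // n _; rewrite expnS dvdn_mulr.
Qed.

Lemma psum1 k : (0 < k)%N -> (#|K|.-1 %| k)%N -> \sum_(x : K) x ^+ k = -1.
Proof.
move=> k0 /dvdnP[m km]; subst k.
rewrite (bigD1 0) //= expr0n.
have -> : (m * #|K|.-1 == 0)%N = false by apply/negbTE; rewrite -lt0n k0.
rewrite add0r (eq_bigr (fun _ => 1)); last by move=> x xnz; rewrite mulnC exprM unit_pow ?expr1n.
rewrite sumr_const.
have -> : #|[pred i : K | i != 0]| = #|K|.-1 by rewrite -(cardC1 (0 : K)).
apply/eqP; rewrite -addr_eq0 -mulrSr prednK; first exact/eqP/cardK_nat0.
exact: ltnW cardK_gt1.
Qed.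

Lemma trace_nat_lt (y : K) : (0 < p)%N -> (trace_nat p y < p)%N.
Proof. by move=> p0; rewrite /trace_nat; case: pickP => [k _ | _] /=. Qed.

Lemma trace_nat_spec (y : K) : (trace_nat p y)%:R = absTrace p y.
Proof.
rewrite /trace_nat; case: pickP => [k /eqP -> // | H].
have [k Hk] := fixed_primefield _ (absTrace_frob y).
by move: (H k); rewrite /= Hk eqxx.
Qed.

Lemma main_alg (d : nat) (m2 : (2 <= #|K|.-1)%N) (ndeg : ~ degenerate K p d) (a c : K)
  (H : forall x : K, absTrace p (x ^+ d) + absTrace p (a * x) = c) : a = 0.
Proof.
have pp := pcharf_prime pK; have p1 := prime_gt1 pp.
pose n := logn p #|K|.
have hq : (#|K|.-1).+1 = (p ^ n)%N.
  rewrite prednK; [exact: cardK_pow | exact: ltnW cardK_gt1].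
pose e := (#|K|.-1).-1.
have S0 : \sum_(x : K) x ^+ e * (absTrace p (x ^+ d) + absTrace p (a * x)) = 0.
  under eq_bigr => x _ do rewrite H.
  by rewrite -mulr_suml psum0 ?mul0r // NT_ndvd_pred.
have S1 : \sum_(x : K) x ^+ e * (absTrace p (x ^+ d) + absTrace p (a * x)) =
    \sum_(i < n) (\sum_(x : K) x ^+ (e + d * p ^ i) + a ^+ (p ^ i) * \sum_(x : K) x ^+ (e + p ^ i)).
  rewrite (eq_bigr (fun x => \sum_(i < n) (x ^+ (e + d * p ^ i) + a ^+ (p ^ i) * x ^+ (e + p ^ i)))).
    by rewrite exchange_big /=; apply: eq_bigr => i _; rewrite big_split /= mulr_sumr.
  move=> x _; rewrite /absTrace -/n -big_split /= mulr_sumr; apply: eq_bigr => i _.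
  by rewrite mulrDr -exprM exprMn !exprD mulrCA.
have Z1 : forall i, (i < n)%N -> \sum_(x : K) x ^+ (e + d * p ^ i) = 0.
  move=> i lin; apply: psum0; apply/negP => hd; apply: ndeg.
  exact: (NT_deg _ _ _ _ _ hq m2 lin hd).
have Z2 : forall i, (0 < i < n)%N -> \sum_(x : K) x ^+ (e + p ^ i) = 0.
  move=> i hi; apply: psum0; exact: (NT_ndvd_pow _ _ _ _ hq p1 hi).
have Z3 : \sum_(x : K) x ^+ (e + p ^ 0) = -1.
  have ee : (e + p ^ 0 = #|K|.-1)%N by rewrite /e expn0 addn1 prednK // ltnW.
  by rewrite ee psum1 // ltnW.
have [n' En] : exists n', n = n'.+1.
  case En : n => [|n']; last by exists n'.
  by move: hq; rewrite En expn0 => -[] e0; move: m2; rewrite e0.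
rewrite S1 En big_ord_recl /= in S0.
rewrite [X in _ + X = _]big1 ?addr0 in S0; last first.
  move=> i _; have hi : (bump 0 i < n)%N by rewrite En /bump /= add1n ltnS ltn_ord.
  by rewrite Z1 // Z2 ?mulr0 ?addr0 // hi andbT.
rewrite Z1 ?Z3 ?En // add0r expn0 expr1 mulrN1 in S0.
by apply/eqP; rewrite -oppr_eq0 S0.
Qed.
End S.

Theorem corollary2p2 (K : finFieldType) (p : nat) (d : nat) :
  p \in [pchar K] ->
  coprime d #|K|.-1 ->
  ~ degenerate K p d ->
  forall a : K, a != 0 -> `|weil_sum p d a| < (#|K|%:R : algC).
Proof.
move=> pK cop ndeg a anz.
have pp := pcharf_prime pK; have p1 := prime_gt1 pp; have p0 := prime_gt0 pp.
have q1 := cardK_gt1 K.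
have m2 : (2 <= #|K|.-1)%N.
  rewrite leqNgt; apply/negP => h; apply: ndeg; exists 0%N.
  have -> : #|K|.-1 = 1%N by lia.
  by rewrite !modn1.
pose F := fun x : K => psiK p (x ^+ d + a * x).
have zprim := zeta_prim _ pp.
have nz : `|zeta_p p| = 1.
  apply/eqP; rewrite -(pexpr_eq1 p0) ?normr_ge0 // -normrX (prim_expr_order zprim).
  by rewrite normr1.
have nF : forall x, `|F x| = 1 by move=> x; rewrite /F /psiK normrX nz expr1n.
have sumN : \sum_(x : K) `|F x| = #|K|%:R.
  by rewrite (eq_bigr (fun _ => 1)) // sumr_const cardT -cardE.
have le : `|weil_sum p d a| <= #|K|%:R by rewrite -sumN; apply: ler_norm_sum.
rewrite lt_neqAle le andbT; apply/eqP => Heq.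
have [t _ Ft] := @normC_sum_eq1 _ K predT F (etrans Heq (esym sumN)) (fun x _ => nF x).
have Htr : forall x : K, absTrace p (x ^+ d) + absTrace p (a * x) = absTrace p (0 ^+ d + a * 0).
  move=> x; rewrite -(absTraceD K p pK).
  have := Ft x isT; rewrite -(Ft 0 isT) /F /psiK => /eqP.
  rewrite (eq_prim_root_expr zprim) !modn_small ?trace_nat_lt // => /eqP E.
  by rewrite -!(trace_nat_spec K p pK) E.
by move/eqP: anz; apply; apply: (main_alg K p pK d m2 ndeg a _ Htr).
Qed.
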